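(* For every $n\ge 2$, $\beta(P_{2\infty}\,\Box\, P_n)=3$, and $S=\{(0,0),(0,n-1),(1,0)\}$ is a metric basis of $P_{2\infty}\,\Box\, P_n$.
   Context: $P_{2\infty}$ has vertex set $\mathbb Z$ and $P_n$ has vertex set $\{0,1,\dots,n-1\}$; in both, $i,j$ are adjacent iff $|i-j|=1$. The cartesian product $G\Box H$ has vertex set $V(G)\times V(H)$, where $(a,v)$ is adjacent to $(b,w)$ iff either $a=b$ and $vw\in E(H)$, or $v=w$ and $ab\in E(G)$. A vertex $x$ resolves $u,v$ if $d(u,x)\ne d(v,x)$ (shortest-path distance); a resolving set is a set of vertices resolving every pair of distinct vertices; $\beta$ is the minimum cardinality of a resolving set ($\infty$ if none is finite), and a metric basis is a resolving set of cardinality $\beta$. *)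

(* Defs.v *)
From Stdlib Require Import ZArith List.
Import ListNotations.
Open Scope Z_scope.

Inductive walk {V : Type} (adj : V -> V -> Prop) : V -> V -> nat -> Prop :=
| walk_nil : forall u, walk adj u u 0
| walk_cons : forall u w v k, adj u w -> walk adj w v k -> walk adj u v (S k).

Definition is_dist {V : Type} (adj : V -> V -> Prop) (u v : V) (k : nat) : Prop :=
  walk adj u v k /\ (forall j, walk adj u v j -> (k <= j)%nat).

(* x resolves u,v : d(u,x) <> d(v,x)  (the distances, possibly infinite, differ) *)
Definition resolves {V : Type} (adj : V -> V -> Prop) (x u v : V) : Prop :=
  ~ (forall k, is_dist adj u x k <-> is_dist adj v x k).

Definition resolving_set {V : Type} (adj : V -> V -> Prop) (S : V -> Prop) : Prop :=
  forall u v, u <> v -> exists x, S x /\ resolves adj x u v.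

Definition has_card {V : Type} (S : V -> Prop) (c : nat) : Prop :=
  exists l : list V, NoDup l /\ length l = c /\ (forall x, S x <-> In x l).

Definition metric_dim_is {V : Type} (adj : V -> V -> Prop) (b : nat) : Prop :=
  (exists S, resolving_set adj S /\ has_card S b) /\
  (forall S c, resolving_set adj S -> has_card S c -> (b <= c)%nat).

Definition metric_basis {V : Type} (adj : V -> V -> Prop) (S : V -> Prop) : Prop :=
  resolving_set adj S /\ exists b, has_card S b /\ metric_dim_is adj b.

Definition P2inf_adj (a b : Z) : Prop := Z.abs (a - b) = 1.

Definition Pn_vert (n : nat) : Type := {k : nat | (k < n)%nat}.
Definition Pn_adj (n : nat) (i j : Pn_vert n) : Prop :=
  (proj1_sig i + 1 = proj1_sig j)%nat \/ (proj1_sig j + 1 = proj1_sig i)%nat.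

Definition box_adj {A B : Type} (adjG : A -> A -> Prop) (adjH : B -> B -> Prop)
  (x y : A * B) : Prop :=
  (fst x = fst y /\ adjH (snd x) (snd y)) \/ (snd x = snd y /\ adjG (fst x) (fst y)).

Definition grid_adj (n : nat) : (Z * Pn_vert n) -> (Z * Pn_vert n) -> Prop :=
  box_adj P2inf_adj (Pn_adj n).

Definition S0 (n : nat) (x : Z * Pn_vert n) : Prop :=
  (fst x = 0 /\ proj1_sig (snd x) = 0%nat) \/
  (fst x = 0 /\ proj1_sig (snd x) = (n - 1)%nat) \/
  (fst x = 1 /\ proj1_sig (snd x) = 0%nat).

(* Main.v *)
Require Import Defs.
From Stdlib Require Import ZArith List Lia Arith.
Import ListNotations.
Open Scope Z_scope.

Section G.
Variable n : nat.

Definition Zd (x y : Z * Pn_vert n) : Z :=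
  Z.abs (fst x - fst y) +
  Z.abs (Z.of_nat (proj1_sig (snd x)) - Z.of_nat (proj1_sig (snd y))).

Lemma sig_ext (i j : Pn_vert n) : proj1_sig i = proj1_sig j -> i = j.
Proof. destruct i as [i hi], j as [j hj]; simpl; intro; subst; f_equal; apply le_unique. Qed.

Lemma walk_app : forall u v k, walk (grid_adj n) u v k ->
  forall w l, walk (grid_adj n) v w l -> walk (grid_adj n) u w (k + l).
Proof.
  induction 1; intros; simpl; auto.
  eapply walk_cons; eauto.
Qed.

Lemma walkZ : forall m a b i, Z.abs (a - b) = Z.of_nat m ->
  walk (grid_adj n) (a,i) (b,i) m.
Proof.
  induction m; intros a b i H.
  - assert (a = b) by lia; subst; constructor.
  - destruct (Z_lt_le_dec a b).
    + apply walk_cons with (a+1, i).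
      * right; split; simpl; [reflexivity| unfold P2inf_adj; lia].
      * apply IHm; lia.
    + apply walk_cons with (a-1, i).
      * right; split; simpl; [reflexivity| unfold P2inf_adj; lia].
      * apply IHm; lia.
Qed.

Lemma walkN : forall m a (i j : Pn_vert n),
  Z.abs (Z.of_nat (proj1_sig i) - Z.of_nat (proj1_sig j)) = Z.of_nat m ->
  walk (grid_adj n) (a,i) (a,j) m.
Proof.
  induction m; intros a [i hi] [j hj] H; simpl in H.
  - assert (i = j) by lia; subst.
    replace hj with hi by apply le_unique; constructor.
  - destruct (Nat.lt_ge_cases i j).
    + assert (h : (i+1 < n)%nat) by lia.
      apply walk_cons with (a, exist _ (i+1)%nat h).
      * left; split; simpl; [reflexivity| left; reflexivity].
      * apply IHm; simpl; lia.
    + assert (h : (i-1 < n)%nat) by lia.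
      apply walk_cons with (a, exist _ (i-1)%nat h).
      * left; split; simpl; [reflexivity| right; simpl; lia].
      * apply IHm; simpl; lia.
Qed.

Lemma walk_exists : forall x y, walk (grid_adj n) x y (Z.to_nat (Zd x y)).
Proof.
  intros [a i] [b j]. unfold Zd; cbn [fst snd proj1_sig].
  replace (Z.to_nat _) with (Z.to_nat (Z.abs (a-b)) +
     Z.to_nat (Z.abs (Z.of_nat (proj1_sig i) - Z.of_nat (proj1_sig j))))%nat by lia.
  apply walk_app with (b, i).
  - apply walkZ; lia.
  - apply walkN; lia.
Qed.

Lemma walk_lb : forall x y k, walk (grid_adj n) x y k -> Zd x y <= Z.of_nat k.
Proof.
  induction 1.
  - unfold Zd; lia.
  - destruct u as [a [i hi]], w as [b [j hj]], v as [c [l hl]].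
    unfold Zd in *; simpl in *.
    unfold grid_adj, box_adj, Pn_adj, P2inf_adj in H; simpl in H.
    destruct H as [[H1 [H2|H2]]|[H1 H2]].
    + lia.
    + lia.
    + apply (f_equal (@proj1_sig _ _)) in H1; simpl in H1. lia.
Qed.

Lemma Zd_nonneg : forall x y, 0 <= Zd x y.
Proof. intros; unfold Zd; lia. Qed.

Lemma dist_char : forall x y k, is_dist (grid_adj n) x y k <-> k = Z.to_nat (Zd x y).
Proof.
  intros x y k; split.
  - intros [H1 H2]. pose proof (walk_lb _ _ _ H1).
    pose proof (H2 _ (walk_exists x y)). lia.
  - intros ->. split; [apply walk_exists|].
    intros j Hj. pose proof (walk_lb _ _ _ Hj). pose proof (Zd_nonneg x y). lia.
Qed.

Lemma res_neq : forall x u v, resolves (grid_adj n) x u v -> Zd u x <> Zd v x.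
Proof.
  intros x u v H E. apply H. intro k. rewrite !dist_char, E. tauto.
Qed.


Lemma neq_res : forall x u v, Zd u x <> Zd v x -> resolves (grid_adj n) x u v.
Proof.
  intros x u v E H. specialize (H (Z.to_nat (Zd u x))). rewrite !dist_char in H.
  destruct H as [H _]. specialize (H eq_refl).
  pose proof (Zd_nonneg u x). pose proof (Zd_nonneg v x). lia.
Qed.

Hypothesis hn : (2 <= n)%nat.

Lemma pair_case3 : forall a b (i j : Pn_vert n),
  proj1_sig i = 0%nat -> proj1_sig j = (n-1)%nat ->
  exists u v, u <> v /\ Zd u (a,i) = Zd v (a,i) /\ Zd u (b,j) = Zd v (b,j).
Proof.
  intros a b [i hi] [j hj] Hi Hj; simpl in Hi, Hj.
  assert (h0 : (0 < n)%nat) by lia. assert (h1 : (1 < n)%nat) by lia.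
  destruct (Z_lt_le_dec a b) as [Hab|Hab]; [|destruct (Z.eq_dec a b) as [E|E]].
  - exists (a, exist _ 1%nat h1), (a+1, exist (fun k => k < n)%nat 0%nat h0).
    split; [intro H; apply (f_equal fst) in H; simpl in H; lia|].
    unfold Zd; cbn [fst snd proj1_sig]; lia.
  - exists (a+1, exist _ 0%nat h0), (a-1, exist (fun k => k < n)%nat 0%nat h0).
    split; [intro H; apply (f_equal fst) in H; simpl in H; lia|].
    unfold Zd; cbn [fst snd proj1_sig]; lia.
  - exists (a, exist _ 1%nat h1), (a-1, exist (fun k => k < n)%nat 0%nat h0).
    split; [intro H; apply (f_equal fst) in H; simpl in H; lia|].
    unfold Zd; cbn [fst snd proj1_sig]; lia.
Qed.

Lemma bad_pair : forall x y : Z * Pn_vert n,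
  exists u v, u <> v /\ Zd u x = Zd v x /\ Zd u y = Zd v y.
Proof.
  intros [a [i hi]] [b [j hj]].
  assert (h0 : (0 < n)%nat) by lia. assert (h1 : (1 < n)%nat) by lia.
  assert (hn1 : (n-1 < n)%nat) by lia. assert (hn2 : (n-2 < n)%nat) by lia.
  set (T := Z.abs a + Z.abs b).
  destruct (le_lt_dec 1 i); destruct (le_lt_dec 1 j).
  - exists (T, exist _ 0%nat h0), (T+1, exist (fun k => k < n)%nat 1%nat h1).
    split; [intro H; apply (f_equal fst) in H; simpl in H; lia|].
    unfold Zd, T; cbn [fst snd proj1_sig]; lia.
  - destruct (le_lt_dec i (n-2)).
    + exists (T, exist _ (n-1)%nat hn1), (T+1, exist (fun k => k < n)%nat (n-2)%nat hn2).
      split; [intro H; apply (f_equal fst) in H; simpl in H; lia|].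
      unfold Zd, T; cbn [fst snd proj1_sig]; lia.
    + destruct (pair_case3 b a (exist _ j hj) (exist _ i hi)) as (u & v & H1 & H2 & H3);
        simpl; try lia.
      exists u, v; auto.
  - destruct (le_lt_dec j (n-2)).
    + exists (T, exist _ (n-1)%nat hn1), (T+1, exist (fun k => k < n)%nat (n-2)%nat hn2).
      split; [intro H; apply (f_equal fst) in H; simpl in H; lia|].
      unfold Zd, T; cbn [fst snd proj1_sig]; lia.
    + apply (pair_case3 a b (exist _ i hi) (exist _ j hj)); simpl; lia.
  - exists (T, exist _ (n-1)%nat hn1), (T+1, exist (fun k => k < n)%nat (n-2)%nat hn2).
    split; [intro H; apply (f_equal fst) in H; simpl in H; lia|].
    unfold Zd, T; cbn [fst snd proj1_sig]; lia.
Qed.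

Lemma lower : forall S c, resolving_set (grid_adj n) S -> has_card S c -> (3 <= c)%nat.
Proof.
  intros S c HR [l [_ [Hl HS]]].
  destruct (le_lt_dec 3 c) as [|Hc]; [assumption|exfalso].
  assert (h0 : (0 < n)%nat) by lia.
  assert (Hxy : exists x y, forall z, S z -> z = x \/ z = y).
  { destruct l as [|x [|y [|w l']]]; simpl in Hl; try lia.
    - exists (0, exist (fun k => k < n)%nat 0%nat h0), (0, exist (fun k => k < n)%nat 0%nat h0).
      intros z Hz; apply HS in Hz; destruct Hz.
    - exists x, x. intros z Hz; apply HS in Hz; simpl in Hz; intuition.
    - exists x, y. intros z Hz; apply HS in Hz; simpl in Hz; intuition. }
  destruct Hxy as (x & y & Hxy).
  destruct (bad_pair x y) as (u & v & Huv & E1 & E2).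
  destruct (HR u v Huv) as (w & Sw & Rw).
  apply res_neq in Rw.
  destruct (Hxy w Sw); subst; auto.
Qed.

Lemma h0n : (0 < n)%nat. Proof. lia. Qed.
Lemma hln : (n - 1 < n)%nat. Proof. lia. Qed.
Definition v0 : Pn_vert n := exist (fun k => (k < n)%nat) 0%nat h0n.
Definition vl : Pn_vert n := exist (fun k => (k < n)%nat) (n-1)%nat hln.

Lemma S0_res : resolving_set (grid_adj n) (S0 n).
Proof.
  intros [p [i hi]] [q [j hj]] Huv.
  destruct (Z.eq_dec (Zd (p, exist _ i hi) (0, v0)) (Zd (q, exist _ j hj) (0, v0))) as [E1|E1];
  [destruct (Z.eq_dec (Zd (p, exist _ i hi) (0, vl)) (Zd (q, exist _ j hj) (0, vl))) as [E2|E2];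
   [destruct (Z.eq_dec (Zd (p, exist _ i hi) (1, v0)) (Zd (q, exist _ j hj) (1, v0))) as [E3|E3]|]|].
  - exfalso. unfold Zd, v0, vl in *; simpl in *.
    assert (i = j) by lia. assert (p = q) by lia. subst.
    apply Huv; f_equal; apply sig_ext; reflexivity.
  - exists (1, v0). split; [right; right; simpl; auto|].
    apply neq_res; exact E3.
  - exists (0, vl). split; [right; left; simpl; auto|].
    apply neq_res; exact E2.
  - exists (0, v0). split; [left; simpl; auto|].
    apply neq_res; exact E1.
Qed.

Lemma S0_card : has_card (S0 n) 3.
Proof.
  exists [(0, v0); (0, vl); (1, v0)]. split; [|split; [reflexivity|]].
  - assert (Hne : vl <> v0) by (intro H; apply (f_equal (@proj1_sig _ _)) in H;
      unfold vl, v0 in H; simpl in H; lia).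
    constructor; [|constructor; [|constructor; [|constructor]]]; simpl.
    + intros [H|[H|[]]]; [apply Hne; exact (f_equal snd H)| discriminate H].
    + intros [H|[]]; inversion H.
    + tauto.
  - intros [a i]; unfold S0; simpl; split.
    + intros [[-> H]|[[-> H]|[-> H]]].
      * left; f_equal; apply sig_ext; rewrite H; reflexivity.
      * right; left; f_equal; apply sig_ext; rewrite H; reflexivity.
      * right; right; left; f_equal; apply sig_ext; rewrite H; reflexivity.
    + intros [H|[H|[H|[]]]]; injection H; intros <- <-; simpl; auto.
Qed.

End G.

Theorem proposition5 (n : nat) (hn : (2 <= n)%nat) :
  metric_dim_is (grid_adj n) 3 /\ metric_basis (grid_adj n) (S0 n).
Proof.
  assert (MD : metric_dim_is (grid_adj n) 3).
  { split.
    - exists (S0 n); split; [apply S0_res|apply S0_card]; exact hn.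
    - intros; eapply lower; eauto. }
  split; [exact MD|].
  split; [apply S0_res; exact hn|].
  exists 3%nat; split; [apply S0_card; exact hn|exact MD].
Qed.
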